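(* Let $\Gamma$ be a nilpotent group, let $r\ge1$, and for each $j=1,\ldots,r$ let $x^{(j)}_1,\ldots,x^{(j)}_{m_j}$ be elements of $\Gamma$, regarded as distinct letters. Let $\alpha$ be a commutator form of weight $r$. Then there exist formal commutators $\eta_1,\ldots,\eta_t$ in the letters $x^{(j)}_i$ with the following properties. (i) In $\Gamma$, $\alpha\big(\prod_{i=1}^{m_1}x^{(1)}_i,\ldots,\prod_{i=1}^{m_r}x^{(r)}_i\big)=\eta_1\cdots\eta_t$. (ii) For each tuple $(i_1,\ldots,i_r)$ with $i_j\in[1,m_j]$ there is some $\eta_l$ equal to $\alpha(x^{(1)}_{i_1},\ldots,x^{(r)}_{i_r})$. (iii) For every $l\in[1,t]$ and every $j\in[1,r]$ there is at least one $i\in[1,m_j]$ with $x^{(j)}_i\sqsubset\eta_l$. (iv) The $\eta_l$ are pairwise distinct as formal commutators in the $x^{(j)}_i$. (v) If $\eta_l$ is not of the form $\alpha(x^{(1)}_{i_1},\ldots,x^{(r)}_{i_r})$ then $\eta_l$ has total weight greater than $r$.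
   Context: $[u,v]=u^{-1}v^{-1}uv$. Formal commutators in letters: each letter is one, and $[\beta,\beta']$ is one whenever $\beta,\beta'$ are; they are interpreted as group elements in the obvious way. The total weight of a formal commutator is the number of letter occurrences in it (weight 1 for a letter, and weights add under bracketing). Components: $C(x)=\{x\}$ for a letter, $C([\beta,\beta'])=C(\beta)\cup C(\beta')\cup\{[\beta,\beta']\}$; $\beta\sqsubset\gamma$ means $\beta\in C(\gamma)$. A commutator form of weight $n$ is a map sending an $n$-tuple of letters to a formal commutator, defined recursively: the unique form of weight 1 is $x\mapsto x$; a form of weight $n\ge2$ is any map $\gamma(y_1,\ldots,y_n)=[\gamma_1(y_{\sigma(1)},\ldots,y_{\sigma(n_1)}),\gamma_2(y_{\sigma(n_1+1)},\ldots,y_{\sigma(n)})]$ where $\gamma_1,\gamma_2$ are forms of weights $n_1,n-n_1\ge1$ and $\sigma\in S_n$. Applied to group elements, a form gives a group element. *)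

(* Defs.v *)
From HB Require Import structures.
From mathcomp Require Import all_boot.
From mathcomp Require Import monoid perm.

Set Implicit Arguments.
Unset Strict Implicit.
Unset Printing Implicit Defensive.

Local Open Scope group_scope.

Section Nilpotent.
Variable G : groupType.

Inductive gen_subgroup (S : G -> Prop) : G -> Prop :=
  | gen_in  x : S x -> gen_subgroup S x
  | gen_one : gen_subgroup S 1
  | gen_mul x y : gen_subgroup S x -> gen_subgroup S y -> gen_subgroup S (x * y)
  | gen_inv x : gen_subgroup S x -> gen_subgroup S x^-1.

(** lower central series: lcs 0 = G (= gamma_1), lcs (k+1) = [lcs k, G] *)
Fixpoint lcs (k : nat) : G -> Prop :=
  match k with
  | 0 => fun _ => True
  | k'.+1 => gen_subgroup (fun g => exists a b, lcs k' a /\ g = commg a b)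
  end.

Definition nilpotent_group : Prop :=
  exists c : nat, forall g, lcs c g -> g = 1.
End Nilpotent.

Inductive fcomm (L : Type) : Type :=
  | Letter of L
  | Comm of fcomm L & fcomm L.
Arguments Letter {L}.
Arguments Comm {L}.

Fixpoint fc_eval (L : Type) (G : groupType) (v : L -> G) (b : fcomm L) : G :=
  match b with
  | Letter x => v x
  | Comm b1 b2 => commg (fc_eval v b1) (fc_eval v b2)
  end.

Fixpoint fc_weight (L : Type) (b : fcomm L) : nat :=
  match b with
  | Letter _ => 1
  | Comm b1 b2 => fc_weight b1 + fc_weight b2
  end.

(** components: b ⊏ g  iff  b ∈ C(g) *)
Fixpoint fc_sub (L : Type) (b g : fcomm L) : Prop :=
  match g with
  | Letter x => b = Letter x
  | Comm g1 g2 => fc_sub b g1 \/ fc_sub b g2 \/ b = Comm g1 g2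
  end.

Fixpoint fc_map (L L' : Type) (f : L -> L') (b : fcomm L) : fcomm L' :=
  match b with
  | Letter x => Letter (f x)
  | Comm b1 b2 => Comm (fc_map f b1) (fc_map f b2)
  end.

(** A form of weight n is represented by the formal commutator
    gamma(y_0,...,y_{n-1}) in placeholder letters 0..n-1 (nat);
    applying it to an n-tuple y of letters substitutes y_k for k.
    The predicate [comm_form n g] follows the recursive definition:
    weight 1: y_0; weight n >= 2:
    [gamma1(y_{s(0)},...,y_{s(n1-1)}), gamma2(y_{s(n1)},...,y_{s(n-1)})]
    with gamma1, gamma2 forms of weights n1, n-n1 >= 1 and s in S_n. *)

Definition perm_nat (n : nat) (s : 'S_n) (k : nat) : nat :=
  match @insub nat (fun k => k < n) 'I_n k with
  | Some i => val (s i)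
  | None => k
  end.

Inductive comm_form : nat -> fcomm nat -> Prop :=
  | form_one : comm_form 1 (Letter 0)
  | form_comm n1 n2 g1 g2 (s : 'S_(n1 + n2)) :
      0 < n1 -> 0 < n2 ->
      comm_form n1 g1 -> comm_form n2 g2 ->
      comm_form (n1 + n2)
        (Comm (fc_map (perm_nat s) g1)
              (fc_map (fun k => perm_nat s (n1 + k)) g2)).

Definition form_apply (L : Type) (g : fcomm nat) (y : nat -> L) : fcomm L :=
  fc_map y g.

Definition gprod (G : groupType) (s : seq G) : G := foldr mul 1 s.

Fixpoint fc_all (L : Type) (P : L -> Prop) (b : fcomm L) : Prop :=
  match b with
  | Letter x => P x
  | Comm b1 b2 => fc_all P b1 /\ fc_all P b2
  end.

(* Main.v *)
Require Import Defs.
From HB Require Import structures.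
From mathcomp Require Import all_boot.
From mathcomp Require Import monoid perm.
From mathcomp Require Import zify.
Set Implicit Arguments.
Unset Strict Implicit.
Local Open Scope group_scope.

Fixpoint fc_eqb (L : eqType) (a b : fcomm L) : bool :=
  match a, b with
  | Letter x, Letter y => x == y
  | Comm a1 a2, Comm b1 b2 => fc_eqb a1 b1 && fc_eqb a2 b2
  | _, _ => false end.
Lemma fc_eqP (L : eqType) : Equality.axiom (@fc_eqb L).
Proof.
elim=> [x|a1 IH1 a2 IH2] [y|b1 b2] /=; try by constructor.
  by apply: (iffP eqP) => [->|[]].
apply: (iffP andP) => [[/IH1 -> /IH2 ->]|[<- <-]] //.
by split; [apply/IH1|apply/IH2].
Qed.
HB.instance Definition _ (L : eqType) := hasDecEq.Build (fcomm L) (@fc_eqP L).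

Fixpoint nesubs (A : Type) (s : seq A) : seq (seq A) :=
  match s with
  | [::] => [::]
  | a :: s' => nesubs s' ++ [:: a] :: map (cons a) (nesubs s')
  end.

Section Core.
Variable L : eqType.
Local Notation T := (fcomm L).

Definition lnorm (c : T) (s : seq T) : T := foldl (@Comm L) c s.

Lemma lnorm_cat c s1 s2 : lnorm c (s1 ++ s2) = lnorm (lnorm c s1) s2.
Proof. exact: foldl_cat. Qed.

Lemma lnorm_inj_size s1 s2 c1 c2 : size s1 = size s2 ->
  lnorm c1 s1 = lnorm c2 s2 -> c1 = c2 /\ s1 = s2.
Proof.
elim: s1 s2 c1 c2 => [|a s1 IH] [|b s2] c1 c2 //= [hs] e.
by have [[-> ->] ->] := IH _ _ _ hs e.
Qed.

Lemma fc_all_lnorm (P : L -> Prop) c s :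
  fc_all P (lnorm c s) -> fc_all P c /\ (forall a, a \in s -> fc_all P a).
Proof.
elim: s c => [|x s IH] c /=; first by [].
move=> /IH [[hc hx] hs]; split=> // a; rewrite inE => /orP [/eqP ->|] //.
exact: hs.
Qed.

Lemma fc_all_lnorm2 (P : L -> Prop) c s :
  fc_all P c -> (forall a, a \in s -> fc_all P a) -> fc_all P (lnorm c s).
Proof.
elim: s c => [|x s IH] c //= hc hs; apply: IH => [|a ha]; last by apply: hs; rewrite inE ha orbT.
by split=> //; apply: hs; rewrite inE eqxx.
Qed.

Lemma fc_all_disj (P Q : L -> Prop) t :
  (forall x, P x -> Q x -> False) -> fc_all P t -> fc_all Q t -> False.
Proof.
move=> hd; elim: t => [x|t1 IH1 t2 IH2] /=; first exact: hd.
by move=> [h1 _] [h1' _]; apply: IH1.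
Qed.

Lemma fc_all_impl (P Q : L -> Prop) t :
  (forall x, P x -> Q x) -> fc_all P t -> fc_all Q t.
Proof. by move=> h; elim: t => [x|t1 IH1 t2 IH2] /=; [apply: h|case; split; auto]. Qed.

Lemma nesubs_mem (s : seq T) a : a \in nesubs s -> a != [::] /\ {subset a <= s}.
Proof.
elim: s a => [|x s IH] a //=; rewrite mem_cat inE => /orP [/IH [h1 h2]|/orP [/eqP ->|]].
- by split=> // y /h2 hy; rewrite inE hy orbT.
- by split=> // y; rewrite inE => /eqP ->; rewrite inE eqxx.
move=> /mapP [b /IH [_ hb] ->]; split=> // y; rewrite !inE => /orP [->|/hb ->] //.
by rewrite orbT.
Qed.

Lemma nesubs_uniq (s : seq T) : uniq s -> uniq (nesubs s).
Proof.
elim: s => [|x s IH] //= /andP [hx /IH hu].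
rewrite cat_uniq hu; apply/and3P; split => //.
- apply/hasPn => a; rewrite inE => /orP [/eqP ->|/mapP [b _ ->]];
  apply/negP => /nesubs_mem [_ /(_ x)]; rewrite inE eqxx => /(_ isT); by rewrite (negbTE hx).
rewrite /= map_inj_uniq ?hu ?andbT; last by move=> ? ? [].
by apply/negP => /mapP [b /nesubs_mem [hb _] [e]]; rewrite -e in hb.
Qed.

Lemma nesubs_single (s : seq T) x : x \in s -> [:: x] \in nesubs s.
Proof.
elim: s => [|y s IH] //=; rewrite inE mem_cat => /orP [/eqP ->|/IH ->] //.
by rewrite inE eqxx orbT.
Qed.

Definition Eexp c V := map (lnorm c) (nesubs V).

Fixpoint Fexp (U W : seq T) : seq T :=
  match U with
  | [::] => [::]
  | u :: U' => [seq lnorm u (a ++ b) | a <- nesubs W, b <- [::] :: nesubs U']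
               ++ Fexp U' W
  end.

Lemma Fexp_cons u U W : Fexp (u :: U) W =
  [seq lnorm u (a ++ b) | a <- nesubs W, b <- [::] :: nesubs U] ++ Fexp U W.
Proof. by []. Qed.

Lemma Fexp_mem U W x : x \in Fexp U W -> exists u a b,
  [/\ u \in U, a \in nesubs W, {subset b <= U} & x = lnorm u (a ++ b)].
Proof.
elim: U => [|u U IH] //; rewrite Fexp_cons mem_cat => /orP [/allpairsP [[a b] [/= ha hb ->]]|].
  exists u, a, b; split => //; first by rewrite inE eqxx.
  move: hb; rewrite inE => /orP [/eqP -> //|/nesubs_mem [_ hb] y /hb hy].
  by rewrite inE hy orbT.
move=> /IH [u' [a [b [h1 h2 h3 ->]]]]; exists u', a, b; split => //.
  by rewrite inE h1 orbT.
by move=> y /h3 hy; rewrite inE hy orbT.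
Qed.

Lemma Fexp_comm U W u w : u \in U -> w \in W -> Comm u w \in Fexp U W.
Proof.
move=> + hw; elim: U => [|u' U IH] //; rewrite Fexp_cons inE mem_cat => /orP [/eqP ->|/IH ->];
  last by rewrite orbT.
apply/orP; left; apply/allpairsP; exists ([:: w], [::]); split => //=.
exact: nesubs_single.
Qed.

Variables (Q1 Q2 : L -> Prop).
Hypothesis hQ : forall x, Q1 x -> Q2 x -> False.

Lemma split_uniq (a1 a2 b1 b2 : seq T) :
  (forall y, y \in a1 ++ a2 -> fc_all Q2 y) ->
  (forall y, y \in b1 ++ b2 -> fc_all Q1 y) ->
  a1 ++ b1 = a2 ++ b2 -> a1 = a2 /\ b1 = b2.
Proof.
elim: a1 a2 => [|x a1 IH] [|y a2] //= ha hb.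
- move=> e; exfalso; apply: (fc_all_disj hQ (t := y)).
    by apply: hb; rewrite e mem_cat inE eqxx.
  by apply: ha; rewrite inE eqxx.
- move=> e; exfalso; apply: (fc_all_disj hQ (t := x)).
    by apply: hb; rewrite -e mem_cat inE eqxx orbT.
  by apply: ha; rewrite inE eqxx.
move=> [<- e].
have ha' : forall z, z \in a1 ++ a2 -> fc_all Q2 z.
  by move=> z hz; apply: ha; move: hz; rewrite !(mem_cat, inE) => /orP [] ->; rewrite ?orbT.
by have [-> ->] := IH a2 ha' hb e.
Qed.

Lemma inj_half u1 u2 a1 a2 b1 b2 :
  fc_all Q1 u2 -> a1 != [::] ->
  (forall y, y \in a1 -> fc_all Q2 y) ->
  (size (a2 ++ b2) <= size (a1 ++ b1))%N ->
  lnorm u1 (a1 ++ b1) = lnorm u2 (a2 ++ b2) -> u1 = u2 /\ a1 ++ b1 = a2 ++ b2.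
Proof.
move=> hu2 ha1 ha hs.
move=> e0.
have e : lnorm (lnorm u1 (take (size (a1 ++ b1) - size (a2 ++ b2)) (a1 ++ b1)))
   (drop (size (a1 ++ b1) - size (a2 ++ b2)) (a1 ++ b1)) = lnorm u2 (a2 ++ b2).
  by rewrite -lnorm_cat cat_take_drop.
have hsz : size (drop (size (a1 ++ b1) - size (a2 ++ b2)) (a1 ++ b1)) = size (a2 ++ b2).
  by rewrite size_drop subKn.
have [e1 e2] := lnorm_inj_size hsz e.
move: e1 e2; case: (size (a1 ++ b1) - size (a2 ++ b2))%N => [|k].
  by rewrite take0 drop0.
move=> e1 _; exfalso.
case: a1 ha1 ha {e e0 hsz hs} e1 => [|x a1] //= _ ha e1.
have hx : fc_all Q1 x.
  have := fc_all_lnorm (P := Q1) (c := u1) (s := x :: take k (a1 ++ b1)).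
  change (lnorm u1 (x :: take k (a1 ++ b1))) with (lnorm (Comm u1 x) (take k (a1 ++ b1))).
  rewrite e1 => /(_ hu2) [_]; apply; by rewrite inE eqxx.
by apply: (fc_all_disj hQ hx); apply: ha; rewrite inE eqxx.
Qed.

Lemma inj_key u1 u2 a1 a2 b1 b2 :
  fc_all Q1 u1 -> fc_all Q1 u2 -> a1 != [::] -> a2 != [::] ->
  (forall y, y \in a1 ++ a2 -> fc_all Q2 y) ->
  (forall y, y \in b1 ++ b2 -> fc_all Q1 y) ->
  lnorm u1 (a1 ++ b1) = lnorm u2 (a2 ++ b2) -> [/\ u1 = u2, a1 = a2 & b1 = b2].
Proof.
move=> hu1 hu2 ha1 ha2 ha hb e.
have [e1 e2] : u1 = u2 /\ a1 ++ b1 = a2 ++ b2.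
  case: (leqP (size (a2 ++ b2)) (size (a1 ++ b1))) => hs.
    by apply: inj_half => // y hy; apply: ha; rewrite mem_cat hy.
  have h2 : forall y, y \in a2 -> fc_all Q2 y.
    by move=> y hy; apply: ha; rewrite mem_cat hy orbT.
  by have [-> ->] := @inj_half u2 u1 a2 a1 b2 b1 hu1 ha2 h2 (ltnW hs) (esym e).
by have [-> ->] := split_uniq ha hb e2; split.
Qed.

Lemma Fexp_uniq U W :
  (forall y, y \in U -> fc_all Q1 y) -> (forall y, y \in W -> fc_all Q2 y) ->
  uniq U -> uniq W -> uniq (Fexp U W).
Proof.
move=> + hW + uW; elim: U => [|u U IH] // hU; rewrite Fexp_cons => /andP [hu uU].
have hU' : forall y, y \in U -> fc_all Q1 y by move=> y hy; apply: hU; rewrite inE hy orbT.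
have hu1 : fc_all Q1 u by apply: hU; rewrite inE eqxx.
have hWs : forall a y, a \in nesubs W -> y \in a -> fc_all Q2 y.
  by move=> a y /nesubs_mem [_ h] /h; apply: hW.
have hUs : forall b y, b \in [::] :: nesubs U -> y \in b -> fc_all Q1 y.
  move=> b y; rewrite inE => /orP [/eqP -> //|/nesubs_mem [_ h] /h]; exact: hU'.
rewrite cat_uniq IH // andbT; apply/andP; split.
  apply: allpairs_uniq; first exact: nesubs_uniq.
    rewrite /= nesubs_uniq // andbT; apply/negP => /nesubs_mem [] //.
  move=> [a1 b1] [a2 b2] /allpairsP [[a1' b1'] [h1 h2 [-> ->]]].
  move=> /allpairsP [[a2' b2'] [h3 h4 [-> ->]]] e.
  rewrite /= in h1 h2 h3 h4 e.
  have hA : forall y, y \in a1' ++ a2' -> fc_all Q2 y.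
    by move=> y; rewrite mem_cat => /orP [] hy; [apply: (hWs a1')|apply: (hWs a2')].
  have hB : forall y, y \in b1' ++ b2' -> fc_all Q1 y.
    by move=> y; rewrite mem_cat => /orP [] hy; [apply: (hUs b1')|apply: (hUs b2')].
  by have [_ -> ->] := inj_key hu1 hu1 (proj1 (nesubs_mem h1)) (proj1 (nesubs_mem h3)) hA hB e.
apply/hasPn => x /Fexp_mem [u' [a [b [h1 h2 h3 ->]]]].
apply/negP => /allpairsP [[a0 b0] [/= ha0 hb0 e]].
have hA : forall y, y \in a ++ a0 -> fc_all Q2 y.
  by move=> y; rewrite mem_cat => /orP [] hy; [apply: (hWs a)|apply: (hWs a0)].
have hB : forall y, y \in b ++ b0 -> fc_all Q1 y.
  move=> y; rewrite mem_cat => /orP [/h3|] hy; [exact: hU'|exact: (hUs b0)].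
have [eu _ _] := inj_key (hU' _ h1) hu1 (proj1 (nesubs_mem h2)) (proj1 (nesubs_mem ha0)) hA hB e.
by move: hu; rewrite -eu h1.
Qed.

End Core.
Section Grp.
Variable G : groupType.
Implicit Types a b c u X Z : G.

Lemma gid1 c a X : commg c (a * X) = commg c X * (commg c a * commg (commg c a) X).
Proof.
rewrite /commg /conjg !invgM !invgK !mulgA.
by rewrite ?(mulgK, mulgVK).
Qed.
Lemma gid2 u X Z : commg (u * X) Z = conjg (commg u Z) X * commg X Z.
Proof.
rewrite /commg /conjg !invgM ?invgK !mulgA.
by rewrite ?(mulgK, mulgVK).
Qed.
Lemma gid3 t X : conjg t X = t * commg t X.
Proof. by rewrite /commg mulgA mulgV mul1g. Qed.

Lemma gprod_cat (s1 s2 : seq G) : gprod (s1 ++ s2) = gprod s1 * gprod s2.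
Proof. by elim: s1 => [|x s1 IH] /=; rewrite ?mul1g // IH mulgA. Qed.

Lemma gprod_conj (s : seq G) X : gprod [seq conjg y X | y <- s] = conjg (gprod s) X.
Proof. by elim: s => [|x s IH] /=; rewrite ?conj1g // IH conjMg. Qed.
End Grp.

Section Vals.
Variables (L : eqType) (G : groupType) (v : L -> G).
Local Notation ev := (fc_eval v).

Lemma Eexp_val c V : gprod (map ev (Eexp c V)) = commg (ev c) (gprod (map ev V)).
Proof.
elim: V c => [|a V IH] c /=; first by rewrite commg1.
rewrite /Eexp !map_cat gprod_cat /=.
rewrite -(map_comp (lnorm c) (cons a)).
change (lnorm c \o cons a) with (lnorm (Comm c a)).
by rewrite -/(Eexp c V) -/(Eexp (Comm c a) V) !IH gid1.
Qed.

Lemma Fexp_val U W : gprod (map ev (Fexp U W)) = commg (gprod (map ev U)) (gprod (map ev W)).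
Proof.
elim: U => [|u U IH]; first by rewrite /= comm1g.
rewrite Fexp_cons map_cat gprod_cat IH [gprod (map ev (u :: U))]/= gid2.
congr (_ * _).
set X := gprod (map ev U).
have H : forall S, gprod (map ev [seq lnorm u (a ++ b) | a <- S, b <- [::] :: nesubs U])
   = gprod [seq conjg (ev (lnorm u a)) X | a <- S].
  elim=> [|a S IHS] //.
  rewrite allpairs_cons map_cat gprod_cat IHS /=; congr (_ * _).
  rewrite cats0 gid3 -(Eexp_val (lnorm u a) U) /Eexp -map_comp.
  congr (_ * gprod _); rewrite -map_comp; apply: eq_map => b /=.
  by rewrite lnorm_cat.
rewrite H -(Eexp_val u W) -gprod_conj /Eexp -!map_comp.
by [].
Qed.
End Vals.

Section Misc.
Variable L : Type.
Lemma fc_weight_pos (t : fcomm L) : (0 < fc_weight t)%N.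
Proof. by elim: t => //= t1 IH1 t2 _; rewrite addn_gt0 IH1. Qed.

Lemma fc_sub_refl (t : fcomm L) : fc_sub t t.
Proof. by case: t => [x|t1 t2] /=; auto. Qed.

Lemma fc_sub_trans (a b c : fcomm L) : fc_sub a b -> fc_sub b c -> fc_sub a c.
Proof.
move=> hab; elim: c => [x|c1 IH1 c2 IH2] /=; first by move=> e; rewrite e /= in hab.
move=> [h|[h|e]]; [left; exact: IH1|right; left; exact: IH2|].
by rewrite e /= in hab.
Qed.
End Misc.

Section Misc2.
Variable L : eqType.
Lemma lnorm_weight (c : fcomm L) s :
  fc_weight (lnorm c s) = (fc_weight c + sumn (map (@fc_weight L) s))%N.
Proof. by elim: s c => [|x s IH] c /=; rewrite ?addn0 // IH /= addnA. Qed.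

Lemma fc_sub_lnorm_base (c : fcomm L) s : fc_sub c (lnorm c s).
Proof.
elim: s c => [|x s IH] c /=; first exact: fc_sub_refl.
apply: fc_sub_trans (IH (Comm c x)) => /=; left; exact: fc_sub_refl.
Qed.

Lemma fc_sub_lnorm_arg (c : fcomm L) s a : a \in s -> fc_sub a (lnorm c s).
Proof.
elim: s c => [|x s IH] c //=; rewrite inE => /orP [/eqP ->|/IH //].
apply: fc_sub_trans (fc_sub_lnorm_base _ _) => /=; right; left; exact: fc_sub_refl.
Qed.
End Misc2.
Section MapLemmas.
Lemma fc_eval_map (A B : Type) (G : groupType) (w : B -> G) (f : A -> B) g :
  fc_eval w (fc_map f g) = fc_eval (w \o f) g.
Proof. by elim: g => [a|g1 IH1 g2 IH2] //=; rewrite IH1 IH2. Qed.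

Lemma fc_map_comp (A B C : Type) (f : B -> C) (f' : A -> B) g :
  fc_map f (fc_map f' g) = fc_map (f \o f') g.
Proof. by elim: g => [a|g1 IH1 g2 IH2] //=; rewrite IH1 IH2. Qed.

Lemma fc_map_ext_all (A B : Type) (P : A -> Prop) (f f' : A -> B) g :
  fc_all P g -> (forall k, P k -> f k = f' k) -> fc_map f g = fc_map f' g.
Proof.
move=> + h; elim: g => [a|g1 IH1 g2 IH2] /=; first by move=> /h ->.
by case=> /IH1 -> /IH2 ->.
Qed.

Lemma fc_weight_map (A B : Type) (f : A -> B) g : fc_weight (fc_map f g) = fc_weight g.
Proof. by elim: g => [a|g1 IH1 g2 IH2] //=; rewrite IH1 IH2. Qed.

Lemma fc_all_map (A B : Type) (P : B -> Prop) (f : A -> B) g :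
  fc_all (P \o f) g -> fc_all P (fc_map f g).
Proof. by elim: g => [a|g1 IH1 g2 IH2] //= [/IH1 ? /IH2 ?]. Qed.
End MapLemmas.

Section Perm.
Variables (n : nat) (s : 'S_n).
Lemma perm_natE (i : 'I_n) : perm_nat s i = s i.
Proof. by rewrite /perm_nat valK. Qed.
Lemma perm_nat_lt k : (k < n)%N -> (perm_nat s k < n)%N.
Proof. by move=> hk; rewrite -[k]/(nat_of_ord (Ordinal hk)) perm_natE. Qed.
Lemma perm_nat_inj k1 k2 : (k1 < n)%N -> (k2 < n)%N -> perm_nat s k1 = perm_nat s k2 -> k1 = k2.
Proof.
move=> h1 h2; rewrite -[k1]/(nat_of_ord (Ordinal h1)) -[k2]/(nat_of_ord (Ordinal h2)) !perm_natE.
by move/val_inj/perm_inj => ->.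
Qed.
Lemma perm_nat_surj k : (k < n)%N -> exists2 k', (k' < n)%N & perm_nat s k' = k.
Proof.
move=> hk; exists (nat_of_ord ((s^-1)%g (Ordinal hk))) => //.
by rewrite perm_natE permKV.
Qed.
End Perm.

Lemma comm_form_props n g : comm_form n g -> fc_weight g = n /\ fc_all (fun k => (k < n)%N) g.
Proof.
elim=> [|n1 n2 g1 g2 s h1 h2 _ [w1 a1] _ [w2 a2]] //=.
rewrite !fc_weight_map w1 w2; split => //; split; apply: fc_all_map.
  by apply: fc_all_impl a1 => k hk /=; apply: perm_nat_lt; rewrite ltn_addr.
by apply: fc_all_impl a2 => k hk /=; apply: perm_nat_lt; rewrite ltn_add2l.
Qed.
Section Main.
Variables (G : groupType) (m : nat -> nat) (x : nat -> nat -> G).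
Definition vv (l : nat * nat) := x l.1 l.2.
Definition Pj j := gprod [seq x j i | i <- iota 0 (m j)].
Definition valid (sig : nat -> nat) n (ii : nat -> nat) :=
  forall k, (k < n)%N -> (ii (sig k) < m (sig k))%N.
Definition inst (sig : nat -> nat) (ii : nat -> nat) (g : fcomm nat) :=
  fc_map (fun k => (sig k, ii (sig k))) g.
Definition Rl (sig : nat -> nat) n (p : nat * nat) :=
  (exists2 k, (k < n)%N & p.1 = sig k) /\ (p.2 < m p.1)%N.

Record Inv n g sig (etas : seq (fcomm (nat * nat))) : Prop := MkInv {
  inv0 : forall e, e \in etas -> fc_all (Rl sig n) e;
  inv1 : fc_eval (fun k => Pj (sig k)) g = gprod (map (fc_eval vv) etas);
  inv2 : forall ii, valid sig n ii -> inst sig ii g \in etas;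
  inv3 : forall e k, e \in etas -> (k < n)%N ->
      exists2 i, (i < m (sig k))%N & fc_sub (Letter (sig k, i)) e;
  inv4 : uniq etas;
  inv5 : forall e, e \in etas ->
      (exists2 ii, valid sig n ii & e = inst sig ii g) \/ (n < fc_weight e)%N }.

Lemma main_base sig : exists etas, Inv 1 (Letter 0) sig etas.
Proof.
exists [seq Letter (sig 0%N, i) | i <- iota 0 (m (sig 0%N))]; split.
- move=> e /mapP [i]; rewrite mem_iota add0n => hi -> /=; split => //.
  by exists 0%N.
- by rewrite /= /Pj -map_comp.
- move=> ii hv; apply/mapP; exists (ii (sig 0%N)) => //.
  by rewrite mem_iota add0n hv.
- move=> e k /mapP [i]; rewrite mem_iota add0n => hi -> hk.
  have -> : k = 0%N by case: k hk.
  by exists i => //=.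
- by rewrite map_inj_uniq ?iota_uniq // => i j [].
move=> e /mapP [i]; rewrite mem_iota add0n => hi ->; left.
exists (fun _ => i) => //.
by move=> k hk; have -> : k = 0%N by case: k hk.
Qed.
End Main.
Section Main2.
Variables (G : groupType) (m : nat -> nat) (x : nat -> nat -> G).

Lemma main n g : comm_form n g -> forall sig,
  (forall k1 k2, (k1 < n)%N -> (k2 < n)%N -> sig k1 = sig k2 -> k1 = k2) ->
  exists etas, Inv m x n g sig etas.
Proof.
elim=> [|n1 n2 g1 g2 s h1 h2 hf1 IH1 hf2 IH2] sig hsig; first exact: main_base.
pose sig1 := fun k => sig (perm_nat s k).
pose sig2 := fun k => sig (perm_nat s (n1 + k)).
have hn1 : forall k, (k < n1)%N -> (k < n1 + n2)%N by move=> k hk; rewrite ltn_addr.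
have hn2 : forall k, (k < n2)%N -> (n1 + k < n1 + n2)%N by move=> k hk; rewrite ltn_add2l.
have hs1 : forall k1 k2, (k1 < n1)%N -> (k2 < n1)%N -> sig1 k1 = sig1 k2 -> k1 = k2.
  move=> k1 k2 a b /(hsig _ _ (perm_nat_lt s (hn1 _ a)) (perm_nat_lt s (hn1 _ b))).
  exact: perm_nat_inj (hn1 _ a) (hn1 _ b).
have hs2 : forall k1 k2, (k1 < n2)%N -> (k2 < n2)%N -> sig2 k1 = sig2 k2 -> k1 = k2.
  move=> k1 k2 a b /(hsig _ _ (perm_nat_lt s (hn2 _ a)) (perm_nat_lt s (hn2 _ b))).
  by move/(perm_nat_inj (hn2 _ a) (hn2 _ b))/eqP; rewrite eqn_add2l => /eqP.
have disj : forall k1 k2, (k1 < n1)%N -> (k2 < n2)%N -> sig1 k1 <> sig2 k2.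
  move=> k1 k2 a b /(hsig _ _ (perm_nat_lt s (hn1 _ a)) (perm_nat_lt s (hn2 _ b))).
  move/(perm_nat_inj (hn1 _ a) (hn2 _ b)) => e.
  by move: a; rewrite e ltnNge leq_addr.
have [etas1 I1] := IH1 sig1 hs1.
have [etas2 I2] := IH2 sig2 hs2.
pose Q1 := fun p : nat * nat => exists2 k, (k < n1)%N & p.1 = sig1 k.
pose Q2 := fun p : nat * nat => exists2 k, (k < n2)%N & p.1 = sig2 k.
have hQ : forall p, Q1 p -> Q2 p -> False.
  by move=> p [k1 a e1] [k2 b e2]; apply: (disj k1 k2 a b); rewrite -e1 -e2.
have U1 : forall y, y \in etas1 -> fc_all Q1 y.
  by move=> y hy; apply: fc_all_impl (inv0 I1 hy) => p [].
have W2 : forall y, y \in etas2 -> fc_all Q2 y.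
  by move=> y hy; apply: fc_all_impl (inv0 I2 hy) => p [].
have wt1 : forall y, y \in etas1 -> (n1 <= fc_weight y)%N.
  move=> y hy; case: (inv5 I1 hy) => [[ii _ ->]|/ltnW //].
  by rewrite /inst fc_weight_map (comm_form_props hf1).1.
have wt2 : forall y, y \in etas2 -> (n2 <= fc_weight y)%N.
  move=> y hy; case: (inv5 I2 hy) => [[ii _ ->]|/ltnW //].
  by rewrite /inst fc_weight_map (comm_form_props hf2).1.
exists (Fexp etas1 etas2); split.
- move=> e /Fexp_mem [u [a [b [hu ha hb ->]]]]; apply: fc_all_lnorm2.
    apply: fc_all_impl (inv0 I1 hu) => p [[k hk e1] hp]; split => //.
    by exists (perm_nat s k) => //; apply: perm_nat_lt; apply: hn1.
  move=> y; rewrite mem_cat => /orP [hy|hy].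
    have hy2 : y \in etas2 by apply: (proj2 (nesubs_mem ha)).
    apply: fc_all_impl (inv0 I2 hy2) => p [[k hk e1] hp]; split => //.
    by exists (perm_nat s (n1 + k)) => //; apply: perm_nat_lt; apply: hn2.
  apply: fc_all_impl (inv0 I1 (hb _ hy)) => p [[k hk e1] hp]; split => //.
  by exists (perm_nat s k) => //; apply: perm_nat_lt; apply: hn1.
- rewrite /= !fc_eval_map.
  transitivity (commg (fc_eval (fun k => Pj m x (sig1 k)) g1)
                      (fc_eval (fun k => Pj m x (sig2 k)) g2)); first by [].
  by rewrite (inv1 I1) (inv1 I2) Fexp_val.
- move=> ii hv.
  have v1 : valid m sig1 n1 ii by move=> k hk; apply: hv; apply: perm_nat_lt; apply: hn1.
  have v2 : valid m sig2 n2 ii by move=> k hk; apply: hv; apply: perm_nat_lt; apply: hn2.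
  rewrite /inst /= !fc_map_comp; exact: Fexp_comm (inv2 I1 v1) (inv2 I2 v2).
- move=> e k /Fexp_mem [u [a [b [hu ha hb ->]]]] hk.
  have [k' hk' ek] := perm_nat_surj s hk.
  case: (ltnP k' n1) => hk1.
    have [i hi hsub] := inv3 I1 hu hk1.
    rewrite -ek; exists i => //; exact: fc_sub_trans hsub (fc_sub_lnorm_base _ _).
  case: a ha => [|w a'] ha; first by have := (nesubs_mem ha).1.
  have hw : w \in etas2 by apply: (proj2 (nesubs_mem ha)); rewrite mem_head.
  have hk2 : (k' - n1 < n2)%N by rewrite ltn_subLR.
  have ek2 : (n1 + (k' - n1))%N = k' by rewrite subnKC.
  have [i hi hsub] := inv3 I2 hw hk2.
  rewrite -ek -ek2; exists i => //; apply: fc_sub_trans hsub (fc_sub_lnorm_arg _ _).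
  by rewrite mem_head.
- exact: Fexp_uniq hQ _ _ U1 W2 (inv4 I1) (inv4 I2).
move=> e /Fexp_mem [u [a [b [hu ha hb ->]]]].
case: a ha => [|w a'] ha; first by have := (nesubs_mem ha).1.
have hw : w \in etas2 by apply: (proj2 (nesubs_mem ha)); rewrite mem_head.
rewrite cat_cons; case E: (a' ++ b) => [|y r'].
  case: (inv5 I1 hu) => [[ii1 v1 eu]|lt1]; last first.
    by right; rewrite /=; apply: leq_trans (leq_add lt1 (wt2 _ hw)).
  case: (inv5 I2 hw) => [[ii2 v2 ew]|lt2]; last first.
    by right; rewrite /=; apply: leq_trans (leq_add (wt1 _ hu) lt2); rewrite addnS.
  left.
  pose ii := fun j => if [exists k : 'I_n1, sig1 k == j] then ii1 j else ii2 j.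
  have E1 : forall k, (k < n1)%N -> ii (sig1 k) = ii1 (sig1 k).
    move=> k hk; rewrite /ii.
    by have -> : [exists k0 : 'I_n1, sig1 k0 == sig1 k] by apply/existsP; exists (Ordinal hk).
  have E2 : forall k, (k < n2)%N -> ii (sig2 k) = ii2 (sig2 k).
    move=> k hk; rewrite /ii.
    have -> // : [exists k0 : 'I_n1, sig1 k0 == sig2 k] = false.
    by apply/existsP => -[k0 /eqP e0]; exact: disj (ltn_ord k0) hk e0.
  exists ii.
    move=> k hk; have [k' hk' <-] := perm_nat_surj s hk.
    case: (ltnP k' n1) => hk1.
      by have := E1 _ hk1; rewrite /sig1 => ->; apply: v1.
    have hk2 : (k' - n1 < n2)%N by rewrite ltn_subLR.
    have ek2 : (n1 + (k' - n1))%N = k' by rewrite subnKC.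
    by have := E2 _ hk2; rewrite /sig2 ek2 => ->; have := v2 _ hk2; rewrite /sig2 ek2.
  rewrite /= eu ew /inst /= !fc_map_comp; congr Comm.
    by apply: fc_map_ext_all (comm_form_props hf1).2 _ => k hk /=; rewrite -/(sig1 k) E1.
  by apply: fc_map_ext_all (comm_form_props hf2).2 _ => k hk /=; rewrite -/(sig2 k) E2.
right; rewrite lnorm_weight /=.
have hy := fc_weight_pos y; have hw' := wt2 _ hw; have hu' := wt1 _ hu.
have hpos : (0 < fc_weight y + sumn [seq fc_weight i | i <- r'])%N.
  by apply: leq_trans hy (leq_addr _ _).
by rewrite addnA -addn1; apply: leq_add (leq_add hu' hw') hpos.
Qed.
End Main2.
Unset Implicit Arguments.

Theorem propositionB2 (G : groupType) (hG : nilpotent_group G)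
  (r : nat) (hr : (1 <= r)%N) (m : nat -> nat) (x : nat -> nat -> G)
  (alpha : fcomm nat) (halpha : comm_form r alpha) :
  let v := fun l : nat * nat => x l.1 l.2 in
  let d := Letter (0%N, 0%N) in
  exists etas : seq (fcomm (nat * nat)),
    (* the eta_l are formal commutators in the letters x^{(j)}_i *)
    (forall l, (l < size etas)%N ->
       fc_all (fun p : nat * nat => (p.1 < r)%N /\ (p.2 < m p.1)%N)
              (nth d etas l)) /\
    (* (i) *)
    fc_eval (fun k => gprod [seq x k i | i <- iota 0 (m k)]) alpha
      = gprod [seq fc_eval v e | e <- etas] /\
    (* (ii) *)
    (forall ii : nat -> nat, (forall j, (j < r)%N -> (ii j < m j)%N) ->
       exists l, (l < size etas)%N /\
         nth d etas l = form_apply alpha (fun j => (j, ii j))) /\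
    (* (iii) *)
    (forall l j, (l < size etas)%N -> (j < r)%N ->
       exists i, (i < m j)%N /\ fc_sub (Letter (j, i)) (nth d etas l)) /\
    (* (iv) *)
    (forall l1 l2, (l1 < size etas)%N -> (l2 < size etas)%N -> l1 <> l2 ->
       nth d etas l1 <> nth d etas l2) /\
    (* (v) *)
    (forall l, (l < size etas)%N ->
       ~ (exists ii : nat -> nat, (forall j, (j < r)%N -> (ii j < m j)%N) /\
            nth d etas l = form_apply alpha (fun j => (j, ii j))) ->
       (r < fc_weight (nth d etas l))%N).
Proof.
move=> v d.
have [etas I] := @main G m x r alpha halpha id (fun k1 k2 _ _ e => e).
exists etas; split; [|split; [|split; [|split; [|split]]]].
- move=> l hl; apply: fc_all_impl (inv0 I (mem_nth d hl)) => p [[k hk e] hp].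
  by rewrite e in hp *; split.
- exact: (inv1 I).
- move=> ii hv; have hm := inv2 I hv.
  exists (index (inst id ii alpha) etas); split; first by rewrite index_mem.
  by rewrite nth_index.
- move=> l j hl hj; have [i hi hs] := inv3 I (mem_nth d hl) hj.
  by exists i.
- move=> l1 l2 h1 h2 ne e; apply: ne; apply/eqP.
  by rewrite -(nth_uniq d h1 h2 (inv4 I)) e.
move=> l hl hn; case: (inv5 I (mem_nth d hl)) => [[ii hv e]|//].
by exfalso; apply: hn; exists ii; split.
Qed.
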